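(* Let $G=(V,E)$ be an event graph and let $\mathcal C$ be the unique sink component of $\mathrm{dec}(G)$. For every $v\in V$ and every $X\subseteq\mathcal U_{|V}$, the node $(v,X)$ belongs to $\mathcal C$ if and only if there exists a closed walk $W$ in $G$ such that (1) $W$ starts and ends at $v$; (2) for each $x\in\mathcal U_{|V}$, $W$ contains at least one node labeled $\mathtt{i}x$ or $\mathtt{d}x$; (3) for each $x\in\mathcal U_{|V}$, $x\in X$ if and only if the last node of $W$ whose label refers to $x$ is labeled $\mathtt{i}x$ (equivalently, $x\notin X$ iff that last node is labeled $\mathtt{d}x$).
   Context: An event graph is a finite, connected, undirected graph $G=(V,E)$, with $n=|V|$, in which every node $v$ carries a label that is either $\mathtt{i}x_v$ (insertion of $x_v$) or $\mathtt{d}x_v$ (deletion of $x_v$), where $x_v$ is an element of a finite universe $\mathcal U$. Write $\mathcal U_{|V}=\{x_v : v\in V\}$. It is assumed that for each $x\in\mathcal U_{|V}$ at least one node is labeled $\mathtt{i}x$ and at least one node is labeled $\mathtt{d}x$. The decorated graph $\mathrm{dec}(G)$ is the directed graph with vertex set $V\times 2^{\mathcal U_{|V}}$ in which $((u,X),(v,Y))$ is an edge if and only if $\{u,v\}\in E$ and $Y=X\cup\{x_v\}$ when $v$ is labeled $\mathtt{i}x_v$, respectively $Y=X\setminus\{x_v\}$ when $v$ is labeled $\mathtt{d}x_v$. A sink component of $\mathrm{dec}(G)$ is a strongly connected component of $\mathrm{dec}(G)$ from which no edge leads to a different strongly connected component; $\mathrm{dec}(G)$ has exactly one sink component, denoted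 $\mathcal C$. A walk in a graph is a finite sequence of nodes in which each node is joined by an edge to its successor (nodes may repeat); it is closed if its first and last nodes coincide. *)

(* Defs.v *)
From mathcomp Require Import all_boot.
Set Implicit Arguments. Unset Strict Implicit. Unset Printing Implicit Defensive.

Section EventGraph.
Variables (V U : finType).
Variable e : rel V.
(* ins v = true iff v is labeled "i (lab v)", false iff labeled "d (lab v)" *)
Variable ins : pred V.
Variable lab : V -> U.

Definition UV : {set U} := [set lab v | v in V].

Definition event_graph : Prop :=
  [/\ symmetric e, irreflexive e, (forall u v, connect e u v) &
      (forall a, a \in UV -> (exists v, lab v = a /\ ins v) /\
                              (exists v, lab v = a /\ ~~ ins v))].

Definition dec_vertex (p : V * {set U}) : bool := p.2 \subset UV.

Definition upd (X : {set U}) (v : V) : {set U} :=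
  if ins v then X :|: [set lab v] else X :\ lab v.

Definition dec_edge : rel (V * {set U}) :=
  fun p q => [&& dec_vertex p, dec_vertex q, e p.1 q.1 & q.2 == upd p.2 q.1].

Definition scc (C : {set V * {set U}}) : Prop :=
  [/\ C != set0,
      {subset C <= dec_vertex},
      (forall a b, a \in C -> b \in C -> connect dec_edge a b) &
      (forall a b, a \in C -> dec_vertex b -> connect dec_edge a b ->
                   connect dec_edge b a -> b \in C)].

Definition sink_component (C : {set V * {set U}}) : Prop :=
  scc C /\ (forall a b, a \in C -> dec_edge a b -> b \in C).

(* the closed walk w = v :: p (nodes in order) starts and ends at v *)
Definition closed_walk_at (v : V) (p : seq V) : bool :=
  path e v p && (last v p == v).

Definition walk_realizes (v : V) (p : seq V) (X : {set U}) : Prop :=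
  forall a, a \in UV ->
    let f := [seq n <- v :: p | lab n == a] in
    f != [::] /\ ((a \in X) = ins (last v f)).
End EventGraph.

(* Main.v *)
Require Import Defs.
From mathcomp Require Import all_boot.
Set Implicit Arguments. Unset Strict Implicit.

Lemma upd_sub (V U : finType) (ins : pred V) (lab : V -> U) (Y : {set U}) x :
  Y \subset UV lab -> upd ins lab Y x \subset UV lab.
Proof.
move=> HY; rewrite /upd; case: (ins x).
  by rewrite subUset sub1set HY /UV; apply: imset_f.
by apply: subset_trans (subsetDl _ _) HY.
Qed.

Lemma foldl_sub (V U : finType) (ins : pred V) (lab : V -> U) (Y : {set U}) q :
  Y \subset UV lab -> foldl (upd ins lab) Y q \subset UV lab.
Proof. by elim: q Y => //= x q IH Y HY; apply: IH; apply: upd_sub. Qed.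

Lemma dec_walk (V U : finType) (e : rel V) (ins : pred V) (lab : V -> U) v q
  (Y : {set U}) : path e v q -> Y \subset UV lab ->
  connect (dec_edge e ins lab) (v, Y) (last v q, foldl (upd ins lab) Y q).
Proof.
elim: q v Y => [|x q IH] v Y /=; first by rewrite connect0.
move=> /andP [evx pq] HY.
apply: (@connect_trans _ _ (x, upd ins lab Y x)); last first.
  by apply: IH => //; apply: upd_sub.
apply: connect1.
by rewrite /dec_edge /dec_vertex /= HY upd_sub // evx eqxx.
Qed.

Lemma dec_walk_inv (V U : finType) (e : rel V) (ins : pred V) (lab : V -> U) a b :
  connect (dec_edge e ins lab) a b ->
  exists r, [/\ path e a.1 r, last a.1 r = b.1 & b.2 = foldl (upd ins lab) a.2 r].
Proof.
move/connectP=> [s ps ->]; elim: s a ps => [|c s IH] a /=; first by exists [::].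
move=> /andP [ac ps]; case: (IH c ps) => r [pr lr fr].
move: ac => /and4P [_ _ e1 /eqP e2].
by exists (c.1 :: r); rewrite /= e1 pr -e2.
Qed.

Lemma sink_closed (V U : finType) (e : rel V) (ins : pred V) (lab : V -> U) C a b :
  sink_component e ins lab C -> a \in C -> connect (dec_edge e ins lab) a b -> b \in C.
Proof.
move=> [_ Hs] aC /connectP [s ps ->]; elim: s a aC ps => [|c s IH] a aC //=.
by move=> /andP [ac ps]; apply: IH ps; apply: Hs ac.
Qed.

Lemma mem_foldl (V U : finType) (ins : pred V) (lab : V -> U) (Y : {set U}) q a :
  (a \in foldl (upd ins lab) Y q) =
  last (a \in Y) [seq ins n | n <- [seq n <- q | lab n == a]].
Proof.
elim: q Y => //= x q IH Y; rewrite IH /upd.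
case: (eqVneq (lab x) a) => [<-|ne] /=.
  by case: (ins x); rewrite ?in_setU ?in_setD1 ?in_set1 eqxx ?orbT.
by case: (ins x); rewrite ?in_setU ?in_setD1 ?in_set1 eq_sym (negbTE ne) ?orbF.
Qed.

Lemma last_nonnil (T : eqType) (x y : T) s : s != [::] -> last x s = last y s.
Proof. by case: s. Qed.

Theorem mainTheorem3 (V U : finType) (e : rel V) (ins : pred V) (lab : V -> U)
  (C : {set V * {set U}}) :
  event_graph e ins lab ->
  sink_component e ins lab C ->
  forall (v : V) (X : {set U}), X \subset UV lab ->
    ((v, X) \in C <->
     exists p : seq V, closed_walk_at e v p /\ walk_realizes ins lab v p X).
Proof.
move=> [esym eirr econ elab] Hsink v X HX.
have [[Cn0 Csub Ccon Cmax] Csink] := Hsink.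
have [u evu]: exists u, e v u.
  have /elab [[w1 [l1 i1]] [w2 [l2 i2]]] : lab v \in UV lab by apply: imset_f.
  have [w wv]: exists w, w != v.
    case: (boolP (ins v)) => iv.
      by exists w2; apply/eqP=> E; move: i2; rewrite E iv.
    by exists w1; apply/eqP=> E; move: i1; rewrite E (negbTE iv).
  have /connectP [r pr lr] := econ v w.
  case: r pr lr => [|u r] /=; first by move=> _ E; move: wv; rewrite E eqxx.
  by move=> /andP [evu _] _; exists u.
have euv: e u v by rewrite esym.
split.
- move=> vXC.
  have [q [pq lq cov]]: exists q, [/\ path e v q, last v q = v & forall x, x \in q].
    suff: forall s : seq V, exists q,
        [/\ path e v q, last v q = v, v \in q & {subset s <= q}].
      move/(_ (enum V)) => [q [pq lq _ sq]]; exists q; split=> // x.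
      by apply: sq; rewrite mem_enum.
    elim=> [|x s [q [pq lq vq sq]]].
      by exists [:: u; v]; rewrite /= evu euv !inE eqxx orbT.
    have /connectP [r1 p1 l1] := econ v x.
    have /connectP [r2 p2 l2] := econ x v.
    exists (q ++ r1 ++ r2); split.
    + by rewrite cat_path pq lq cat_path p1 -l1 p2.
    + by rewrite !last_cat lq -l1 -l2.
    + by rewrite mem_cat vq.
    move=> y; rewrite inE => /orP [/eqP ->|ys]; last by rewrite mem_cat sq.
    case: r1 p1 l1 => [|z r1] _ l1 /=; first by rewrite l1 mem_cat vq.
    have xr : x \in z :: r1 by rewrite l1 /=; apply: mem_last.
    by rewrite mem_cat -cat_cons mem_cat xr !orbT.
  set Y := foldl (upd ins lab) X q.
  have c1 := dec_walk ins pq HX; rewrite lq in c1.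
  have YC : (v, Y) \in C := sink_closed Hsink vXC c1.
  have := Ccon _ _ YC vXC; move/dec_walk_inv => /= [r [pr lr fr]].
  exists (q ++ r); split.
    by rewrite /closed_walk_at cat_path pq lq pr last_cat lq lr eqxx.
  have fX : foldl (upd ins lab) X (q ++ r) = X by rewrite foldl_cat -/Y -fr.
  move=> a aUV /=.
  have [x lx] : exists x, lab x = a by case/imsetP: aUV => x _ ->; exists x.
  have hp : [seq n <- q ++ r | lab n == a] != [::].
    by rewrite -has_filter; apply/hasP; exists x; rewrite ?mem_cat ?cov ?lx.
  split; first by case: ifP.
  rewrite -{1}fX mem_foldl.
  rewrite (@last_nonnil _ _ (ins v)); last by move: hp; case: [seq _ <- _ | _].
  rewrite last_map; by case: ifP.
- move=> [p [/andP [pp /eqP lp] rX]].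
  case/set0Pn: Cn0 => [[w Z] wZC].
  have /connectP [r pr lr] := econ w v.
  have HZ : Z \subset UV lab by have := Csub _ wZC.
  have c := dec_walk ins pr HZ; rewrite -lr in c.
  have Y0C := sink_closed Hsink wZC c.
  have HY0 := foldl_sub ins r HZ.
  have pp' : path e v [:: u, v & p] by rewrite /= evu euv pp.
  have c2 := dec_walk ins pp' HY0.
  have := sink_closed Hsink Y0C c2; rewrite /= lp.
  suff -> : X = foldl (upd ins lab) (foldl (upd ins lab) Z r) [:: u, v & p] by [].
  apply/setP => a; case: (boolP (a \in UV lab)) => aU.
    rewrite mem_foldl; move: (rX a aU) => /= [hne heq]; rewrite heq.
    set F := (if lab v == a then _ else _) in hne *.
    have H : forall d, last d [seq ins n | n <- F] = ins (last v F).
      move=> d; rewrite (@last_nonnil _ d (ins v)) ?last_map //.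
      by move: hne; case: F.
    by case: ifP => _ /=; rewrite H.
  have aX : a \notin X by apply: contra aU; apply: (subsetP HX).
  have aF : a \notin foldl (upd ins lab) (foldl (upd ins lab) Z r) [:: u, v & p].
    by apply: contra aU; apply: subsetP; apply: foldl_sub.
  by rewrite (negbTE aX) (negbTE aF).
Qed.
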